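(* Let $n=em$ with $e,m\geq1$ integers, let $k$ be a positive integer, let $\alpha,\beta\in\mathbb{F}_{2^e}^*$ with $\beta=\alpha^2$, and let $c_i\in\mathbb{F}_2$ for $1\leq i\leq\lfloor\frac{m-1}{2}\rfloor$. Define $f_Q:\mathbb{F}_{2^n}\to\mathbb{F}_2$ by $$f_Q(x)=p(\alpha x)+\sum_{i=1}^{\lfloor\frac{m-1}{2}\rfloor}c_i\,\mathrm{tr}_1^n\big(\beta x^{1+2^{eki}}\big),$$ where $$p(x)=\begin{cases}\sum_{i=1}^{n/2-1}\mathrm{tr}_1^n\big(x^{1+2^i}\big)+\mathrm{tr}_1^{n/2}\big(x^{1+2^{n/2}}\big) & \text{if } n \text{ is even},\\ \sum_{i=1}^{(n-1)/2}\mathrm{tr}_1^n\big(x^{1+2^i}\big) & \text{if } n \text{ is odd}.\end{cases}$$ Then $f_Q$ is bent (if $n$ is even), respectively semi-bent (if $n$ is odd), if and only if $\gcd(c(x^k),x^m-1)=1$ in $\mathbb{F}_2[x]$, where $c(x)=1+\sum_{i=1}^{\lfloor\frac{m-1}{2}\rfloor}c_i(x^i+x^{m-i})$.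
   Context: $\mathbb{F}_{2^e}$ is regarded as a subfield of $\mathbb{F}_{2^n}$ (as $e\mid n$). $\mathrm{tr}_1^n(x)=\sum_{j=0}^{n-1}x^{2^j}$ is the absolute trace from $\mathbb{F}_{2^n}$ to $\mathbb{F}_2$, and for even $n$, $\mathrm{tr}_1^{n/2}(y)=\sum_{j=0}^{n/2-1}y^{2^j}$ for $y\in\mathbb{F}_{2^{n/2}}$ (note $x^{1+2^{n/2}}\in\mathbb{F}_{2^{n/2}}$). For $g:\mathbb{F}_{2^n}\to\mathbb{F}_2$, its Walsh transform is $\hat g(a)=\sum_{x\in\mathbb{F}_{2^n}}(-1)^{g(x)+\mathrm{tr}_1^n(ax)}$; $g$ is bent if $|\hat g(a)|=2^{n/2}$ for all $a\in\mathbb{F}_{2^n}$, and semi-bent if $|\hat g(a)|\in\{0,2^{\lfloor (n+2)/2\rfloor}\}$ for all $a\in\mathbb{F}_{2^n}$. *)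

(* Defs.v *)
From HB Require Import structures.
From mathcomp Require Import all_boot all_order all_algebra all_field.
Set Implicit Arguments. Unset Strict Implicit. Unset Printing Implicit Defensive.
Import Order.TTheory GRing.Theory Num.Theory.
Local Open Scope ring_scope.

(* F plays the role of F_{2^n}; Boolean functions F_{2^n} -> F_2 are
   represented as F-valued functions (values 0 / 1 of the prime subfield). *)

Definition trn (F : finFieldType) (n : nat) (x : F) : F :=
  \sum_(j < n) x ^+ (2 ^ j).

Definition trhalf (F : finFieldType) (n : nat) (y : F) : F :=
  \sum_(j < n./2) y ^+ (2 ^ j).

Definition pfun (F : finFieldType) (n : nat) (x : F) : F :=
  if ~~ odd n then
    \sum_(1 <= i < n./2) trn n (x ^+ (1 + 2 ^ i)) + trhalf n (x ^+ (1 + 2 ^ (n./2)))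
  else \sum_(1 <= i < n./2 + 1) trn n (x ^+ (1 + 2 ^ i)).

Definition fQ (F : finFieldType) (n e m k : nat) (alpha beta : F)
    (c : nat -> bool) (x : F) : F :=
  pfun n (alpha * x) +
  \sum_(1 <= i < (m.-1)./2 + 1) (c i)%:R * trn n (beta * x ^+ (1 + 2 ^ (e * k * i))).

Definition walsh (F : finFieldType) (n : nat) (g : F -> F) (a : F) : int :=
  \sum_(x : F) (if g x + trn n (a * x) == 0 then 1 else -1).

Definition bent (F : finFieldType) (n : nat) (g : F -> F) : Prop :=
  forall a : F, `|walsh n g a| = (2 ^ (n./2))%:Z.

Definition semibent (F : finFieldType) (n : nat) (g : F -> F) : Prop :=
  forall a : F, `|walsh n g a| = 0 \/ `|walsh n g a| = (2 ^ ((n + 2) %/ 2))%:Z.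

Definition cpoly (m : nat) (c : nat -> bool) : {poly 'F_2} :=
  1 + \sum_(1 <= i < (m.-1)./2 + 1) (c i)%:R *: ('X^i + 'X^(m - i)).

(* Submission.v *)
Require Import Defs.
From HB Require Import structures.
From mathcomp Require Import all_boot all_order all_algebra all_field.
From mathcomp Require Import zify ring.
Set Implicit Arguments. Unset Strict Implicit. Unset Printing Implicit Defensive.
Import Order.TTheory GRing.Theory Num.Theory.
Local Open Scope ring_scope.

Section Basics.
Variable F : finFieldType.
Hypothesis h2 : 2 \in [pchar F].

Lemma addxx (x : F) : x + x = 0.
Proof. exact: addrr_pchar2. Qed.

Lemma oppx (x : F) : - x = x.
Proof. exact: oppr_pchar2. Qed.

Lemma sqrD (x y : F) : (x + y) ^+ 2 = x ^+ 2 + y ^+ 2.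
Proof. by rewrite sqrrD mulrn_pchar // addr0. Qed.

Lemma frobD j (x y : F) : (x + y) ^+ (2 ^ j) = x ^+ (2 ^ j) + y ^+ (2 ^ j).
Proof.
elim: j x y => [|j IH] x y; first by rewrite !expr1.
by rewrite expnS !exprM sqrD IH.
Qed.

Lemma frobM j (x y : F) : (x * y) ^+ (2 ^ j) = x ^+ (2 ^ j) * y ^+ (2 ^ j).
Proof. exact: exprMn. Qed.

Lemma frob0 j : (0 : F) ^+ (2 ^ j) = 0.
Proof. by rewrite expr0n expn_eq0. Qed.

Lemma frob1 j : (1 : F) ^+ (2 ^ j) = 1.
Proof. by rewrite expr1n. Qed.

Lemma frobX i j (x : F) : (x ^+ (2 ^ i)) ^+ (2 ^ j) = x ^+ (2 ^ (i + j)).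
Proof. by rewrite -exprM -expnD. Qed.

Lemma frob_sum j (I : Type) (r : seq I) (P : pred I) (G : I -> F) :
  (\sum_(i <- r | P i) G i) ^+ (2 ^ j) = \sum_(i <- r | P i) (G i) ^+ (2 ^ j).
Proof. apply: (big_morph (fun x => x ^+ (2 ^ j))); [exact: frobD | exact: frob0]. Qed.

Definition idem (u : F) := u ^+ 2 = u.

Lemma idem01 u : idem u -> u = 0 \/ u = 1.
Proof.
rewrite /idem => H.
have : u * (u - 1) = 0 by rewrite mulrBr mulr1 -expr2 H subrr.
by move/eqP; rewrite mulf_eq0 subr_eq0 => /orP [] /eqP; [left|right].
Qed.

Lemma idem0 : idem 0. Proof. by rewrite /idem expr0n. Qed.
Lemma idem1 : idem 1. Proof. by rewrite /idem expr1n. Qed.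
Lemma idemD u v : idem u -> idem v -> idem (u + v).
Proof. by rewrite /idem sqrD => -> ->. Qed.
Lemma idemM u v : idem u -> idem v -> idem (u * v).
Proof. by rewrite /idem exprMn => -> ->. Qed.
Lemma idem_sum (I : Type) (r : seq I) (P : pred I) (G : I -> F) :
  (forall i, P i -> idem (G i)) -> idem (\sum_(i <- r | P i) G i).
Proof.
move=> H; elim/big_rec: _ => [|i x Pi Hx]; first exact: idem0.
exact: idemD (H i Pi) Hx.
Qed.
Lemma idem_nat (b : bool) : idem (b%:R).
Proof. by case: b; [exact: idem1 | exact: idem0]. Qed.

Variable n : nat.
Hypothesis hn0 : (0 < n)%N.
Hypothesis hq : forall x : F, x ^+ (2 ^ n) = x.

Lemma frob_nq q (x : F) : x ^+ (2 ^ (n * q)) = x.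
Proof.
elim: q => [|q IH]; first by rewrite muln0 expr1.
by rewrite mulnS expnD exprM hq IH.
Qed.

Lemma frob_mod a (x : F) : x ^+ (2 ^ a) = x ^+ (2 ^ (a %% n)).
Proof.
by rewrite {1}(divn_eq a n) expnD exprM mulnC frob_nq.
Qed.

Lemma frob_eqmod a b (x : F) : a = b %[mod n] -> x ^+ (2 ^ a) = x ^+ (2 ^ b).
Proof. by move=> H; rewrite frob_mod H -frob_mod. Qed.

Notation Tr := (@trn F n).

Lemma TrD x y : Tr (x + y) = Tr x + Tr y.
Proof. by rewrite /trn -big_split /=; apply: eq_bigr => j _; rewrite frobD. Qed.

Lemma Tr0 : Tr 0 = 0.
Proof. by rewrite /trn big1 // => j _; rewrite frob0. Qed.

Lemma Tr_sum (I : Type) (r : seq I) (P : pred I) (G : I -> F) :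
  Tr (\sum_(i <- r | P i) G i) = \sum_(i <- r | P i) Tr (G i).
Proof. apply: (big_morph Tr); [exact: TrD | exact: Tr0]. Qed.

Lemma Tr_sq x : Tr x ^+ 2 = Tr x.
Proof.
have E : forall y : F, y ^+ 2 = y ^+ (2 ^ 1) by [].
rewrite /trn E frob_sum.
under eq_bigr do rewrite frobX addn1.
case: n hn0 hq => // n' _ hq'.
rewrite big_ord_recr big_ord_recl /= hq' expr1 addrC; congr (_ + _).
Qed.

Lemma Tr_idem x : idem (Tr x).
Proof. exact: Tr_sq. Qed.

Lemma Tr_sqr y : Tr (y ^+ (2 ^ 1)) = Tr y ^+ (2 ^ 1).
Proof. by rewrite /trn frob_sum; apply: eq_bigr => i _; rewrite !frobX addnC. Qed.

Lemma Tr_frob j x : Tr (x ^+ (2 ^ j)) = Tr x.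
Proof.
elim: j => [|j IH]; first by rewrite expr1.
by rewrite -(addn1 j) -frobX Tr_sqr IH Tr_sq.
Qed.

Lemma Tr1 : Tr 1 = n%:R.
Proof. by rewrite /trn (eq_bigr (fun _ => 1)) ?sumr_const ?card_ord // => i _; rewrite expr1n. Qed.

Lemma TrMnat (b : bool) x : Tr (b%:R * x) = b%:R * Tr x.
Proof. by case: b; rewrite ?mul1r ?mul0r ?Tr0. Qed.

End Basics.

Section LP.
Variable F : finFieldType.

Lemma linpoly_nz (s N : nat) (a : nat -> F) : (0 < s)%N -> a N != 0 ->
  (2 ^ (s * N) < #|F|)%N -> exists y, \sum_(j < N.+1) a j * y ^+ (2 ^ (s * j)) != 0.
Proof.
move=> s0 aN hlt.
pose P := \sum_(j < N.+1) a j *: 'X^(2 ^ (s * j)).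
have hP y : P.[y] = \sum_(j < N.+1) a j * y ^+ (2 ^ (s * j)).
  by rewrite /P horner_sum; apply: eq_bigr => j _; rewrite hornerZ hornerXn.
have szP : (size P <= (2 ^ (s * N)).+1)%N.
  apply: leq_trans (size_sum _ _ _) _.
  apply/bigmax_leqP => j _.
  apply: leq_trans (size_scale_leq _ _) _.
  rewrite size_polyXn ltnS leq_exp2l // leq_pmul2l //.
  by rewrite -ltnS.
have cP : P`_(2 ^ (s * N)) = a N.
  rewrite /P coef_sum (bigD1 ord_max) //= coefZ coefXn eqxx mulr1 big1 ?addr0 //.
  move=> j hj; rewrite coefZ coefXn eqn_exp2l // eqn_pmul2l //.
  case: eqP => [|]; last by rewrite mulr0.
  by move=> hjN; move: hj; rewrite -val_eqE /= -hjN eqxx.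
have Pnz : P != 0 by apply/eqP => P0; move: aN; rewrite -cP P0 coef0 eqxx.
case: (pickP (fun y => P.[y] != 0)) => [y hy|H]; first by exists y; rewrite -hP.
have := max_poly_roots Pnz (rs := enum F).
rewrite enum_uniq -cardT.
have -> : all (root P) (enum F).
  by apply/allP => y _; rewrite /root; move: (H y) => /= /negbFE.
move=> /(_ isT isT) h; move: (leq_trans h szP); rewrite ltnS leqNgt hlt //.
Qed.

End LP.

Section Walsh.
Variable F : finFieldType.
Variable n : nat.
Hypothesis hF : #|F| = (2 ^ n)%N.
Hypothesis hn0 : (0 < n)%N.

Lemma h2F : 2 \in [pchar F].
Proof. exact: (card_finPcharP hF). Qed.

Lemma hqF (x : F) : x ^+ (2 ^ n) = x.
Proof. by rewrite -hF expf_card. Qed.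

Notation Tr := (@trn F n).

Lemma Tr_nondeg (a : F) : a != 0 -> exists y, Tr (a * y) = 1.
Proof.
move=> a0.
have [n' en] : exists n', n = n'.+1 by exists n.-1; rewrite prednK.
have := @linpoly_nz F 1 n' (fun j => a ^+ (2 ^ j)) isT.
have hlt : (2 ^ (1 * n') < #|F|)%N by rewrite hF en mul1n ltn_exp2l.
rewrite expf_eq0 (negbTE a0) andbF => /(_ isT hlt) [y hy].
exists y.
have : Tr (a * y) != 0.
  move: hy; rewrite /trn en; congr (~~ (_ == _)).
  by apply: eq_bigr => j _; rewrite frobM mul1n.
have := Tr_idem h2F hn0 hqF (a * y).
by move=> /idem01 [] ->; rewrite ?eqxx.
Qed.

Definition sg (u : F) : int := if u == 0 then 1 else -1.

Lemma sgD u v : idem u -> idem v -> sg (u + v) = sg u * sg v.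
Proof.
move=> /idem01 [] -> /idem01 [] ->; rewrite /sg ?addr0 ?add0r ?eqxx ?oner_eq0 //.
by rewrite (addxx h2F) eqxx.
Qed.

Lemma sg1 : sg 1 = -1.
Proof. by rewrite /sg oner_eq0. Qed.

Lemma sg0 : sg 0 = 1.
Proof. by rewrite /sg eqxx. Qed.

Lemma charsum0 (P : pred F) (l : F -> F) x0 :
  (forall x y, P x -> P y -> P (x + y)) ->
  (forall x y, P x -> P y -> l (x + y) = l x + l y) ->
  (forall x, P x -> idem (l x)) -> P x0 -> l x0 != 0 ->
  \sum_(x | P x) sg (l x) = 0.
Proof.
move=> PD lD lid Px0 lx0.
have l1 : l x0 = 1 by case: (idem01 (lid _ Px0)) lx0 => ->; rewrite ?eqxx.
set S := \sum_(x | P x) _.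
have eP x : P (x + x0) = P x.
  apply/idP/idP => [h|h]; last exact: PD.
  by have := PD _ _ h Px0; rewrite -addrA (addxx h2F) addr0.
have E : S = \sum_(x | P x) sg (l (x + x0)).
  by rewrite /S (reindex_inj (addIr x0)) /=; apply: eq_bigl => x; exact: eP.
have : S = - S.
  rewrite {1}E /S -sumrN.
  apply: eq_bigr => x Px.
  by rewrite lD // l1 sgD ?sg1 ?mulrN1 //; [exact: lid | exact: idem1].
move=> H; lia.
Qed.

Lemma charsum_all (P : pred F) (l : F -> F) :
  (forall x, P x -> l x = 0) -> \sum_(x | P x) sg (l x) = #|P|%:Z.
Proof.
move=> H; rewrite (eq_bigr (fun _ => 1)) => [|x Px]; last by rewrite H // sg0.
have -> : \sum_(i | P i) (1:int) = \sum_(i in P) (1:int) by []. by rewrite sumr_const natz.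
Qed.

Lemma sum_char_lin (x : F) :
  \sum_(a : F) sg (Tr (a * x)) = if x == 0 then (2 ^ n)%:Z else 0.
Proof.
case: eqP => [->|/eqP x0].
  rewrite (eq_bigr (fun _ => 1)) => [|a _]; last by rewrite mulr0 Tr0 sg0.
  by rewrite sumr_const -hF natz.
have [y hy] := Tr_nondeg x0.
apply: (@charsum0 predT (fun a => Tr (a * x)) y) => //.
- by move=> a b _ _; rewrite mulrDl (TrD h2F).
- move=> a _ /=. exact: (Tr_idem h2F hn0 hqF).
- by rewrite mulrC hy oner_eq0.
Qed.

End Walsh.

Section Walsh2.
Variable F : finFieldType.
Variable n : nat.
Hypothesis hF : #|F| = (2 ^ n)%N.
Hypothesis hn0 : (0 < n)%N.
Notation Tr := (@trn F n).
Notation sg := (@sg F).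
Variables (f M : F -> F).
Hypothesis fid : forall x, idem (f x).
Hypothesis hD : forall x z, f (x + z) + f x + f z = Tr (x * M z).
Hypothesis hM : forall x y, M (x + y) = M x + M y.

Let h2 := h2F hF.
Let hq := hqF hF.
Let TrI y : idem (Tr y) := Tr_idem h2 hn0 hq y.

Lemma add2K (a b : F) : a + b + b = a.
Proof. by rewrite -addrA (addxx h2) addr0. Qed.

Lemma fD x z : f (x + z) = Tr (x * M z) + f x + f z.
Proof. rewrite -hD (addrAC _ (f z) (f x)). by rewrite add2K -addrA (addxx h2) addr0. Qed.

Lemma M0 : M 0 = 0.
Proof. by have h := hM 0 0; apply: (addrI (M 0)); rewrite addr0 -h addr0. Qed.

Lemma f0 : f 0 = 0.
Proof. by have := fD 0 0; rewrite addr0 mul0r Tr0 add0r (addxx h2). Qed.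

Lemma walsh_sq a : walsh n f a ^+ 2 =
  (2 ^ n)%:Z * \sum_(z | M z == 0) sg (f z + Tr (a * z)).
Proof.
have uid y : idem (f y + Tr (a * y)) by apply: idemD.
have -> : walsh n f a = \sum_(x : F) sg (f x + Tr (a * x)) by [].
rewrite expr2 big_distrl /=.
have key x z : sg (f x + Tr (a * x)) * sg (f (x + z) + Tr (a * (x + z))) =
    sg (Tr (x * M z)) * sg (f z + Tr (a * z)).
  rewrite -!(sgD hF) //; congr sg.
  rewrite fD mulrDr (TrD h2).
  rewrite (_ : f x + Tr (a * x) + (Tr (x * M z) + f x + f z + (Tr (a * x) + Tr (a * z)))
     = Tr (x * M z) + (f z + Tr (a * z)) + (f x + Tr (a * x)) *+ 2); last by ring.
  by rewrite mulrn_pchar // addr0.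
under eq_bigr => x _ do rewrite big_distrr /= (reindex_inj (addrI x)) /=.
under eq_bigr => x _ do under eq_bigr => z _ do rewrite key.
rewrite exchange_big /=.
under eq_bigr => z _ do rewrite -big_distrl /= (sum_char_lin hF hn0).
rewrite mulr_sumr [RHS]big_mkcond /=; apply: eq_bigr => z _.
by case: ifP => _; rewrite ?mul0r ?mulr0 // mulrC.
Qed.

Lemma walsh_Rsum a : \sum_(z | M z == 0) sg (f z + Tr (a * z)) = 0 \/
   \sum_(z | M z == 0) sg (f z + Tr (a * z)) = #|[pred z | M z == 0]|%:Z.
Proof.
have PD x y : M x == 0 -> M y == 0 -> M (x + y) == 0.
  by move=> /eqP hx /eqP hy; rewrite hM hx hy addr0.
have lD x y : M x == 0 -> M y == 0 ->
   f (x + y) + Tr (a * (x + y)) = f x + Tr (a * x) + (f y + Tr (a * y)).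
  move=> _ /eqP hy; rewrite fD hy mulr0 Tr0 add0r mulrDr (TrD h2).
  by rewrite -!addrA; congr (_ + _); rewrite addrCA.
case: (pickP (fun z => (M z == 0) && (f z + Tr (a * z) != 0))) => [z /andP [hz hl]|H].
  left; apply: (@charsum0 F n hF hn0 (fun z => M z == 0) (fun z => f z + Tr (a * z)) z) => //.
  by move=> x _; apply: idemD.
right; apply: (charsum_all (F := F) (P := fun z => M z == 0)) => z hz.
by move: (H z); rewrite hz /= => /negbFE /eqP.
Qed.

Lemma walsh_vals a : walsh n f a ^+ 2 = 0 \/
  walsh n f a ^+ 2 = (2 ^ n)%:Z * #|[pred z | M z == 0]|%:Z.
Proof.
rewrite walsh_sq; case: (walsh_Rsum a) => ->; [left; exact: mulr0 | right].
done.
Qed.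

Lemma walsh_exists : exists a,
  walsh n f a ^+ 2 = (2 ^ n)%:Z * #|[pred z | M z == 0]|%:Z.
Proof.
have S : \sum_(a : F) walsh n f a = sg (f 0) * (2 ^ n)%:Z.
  have -> : \sum_(a : F) walsh n f a = \sum_(a : F) \sum_(x : F) sg (f x + Tr (a * x)) by [].
  rewrite exchange_big /=.
  under eq_bigr => x _ do under eq_bigr => y _ do rewrite (sgD hF) //.
  under eq_bigr => x _ do rewrite -big_distrr /= (sum_char_lin hF hn0).
  rewrite (bigD1 0) //= eqxx big1 ?addr0 // => x /negbTE ->; exact: mulr0.
case: (pickP (fun a => walsh n f a != 0)) => [a ha|H].
  exists a; case: (walsh_vals a) => // /eqP; rewrite expf_eq0 /= => /eqP h.
  by move: ha; rewrite h eqxx.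
exfalso; move: S; rewrite big1 => [|a _]; last by move: (H a) => /= /negbFE /eqP.
rewrite f0 sg0 mul1r => h; case: h => h'.
by move: (expn_gt0 2 n); rewrite -h'.
Qed.

Lemma walsh_trivR : (forall z, M z = 0 -> z = 0) ->
  forall a, walsh n f a ^+ 2 = (2 ^ n)%:Z.
Proof.
move=> Mi a; rewrite walsh_sq (big_pred1 0) => [|z /=]; last first.
  by apply/eqP/eqP => [/Mi|->]; last exact: M0.
by rewrite f0 mulr0 Tr0 add0r sg0 mulr1.
Qed.

End Walsh2.

Lemma sq_to_abs (W : int) (k : nat) : W ^+ 2 = (2 ^ (k + k))%:Z -> `|W| = (2 ^ k)%:Z.
Proof.
move=> h; apply/eqP; rewrite -(@eqrXn2 _ 2) //= ?normr_ge0 //.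
by rewrite real_normK ?num_real // h -!natz -natrX -expnM muln2 -addnn.
Qed.

Lemma abs_to_sq (W : int) (k : nat) : `|W| = (2 ^ k)%:Z -> W ^+ 2 = (2 ^ (k + k))%:Z.
Proof.
move=> h; rewrite -real_normK ?num_real // h.
by rewrite -!natz -natrX -expnM muln2 -addnn.
Qed.

Section Final.
Variable F : finFieldType.
Variable n : nat.
Hypothesis hF : #|F| = (2 ^ n)%N.
Hypothesis hn0 : (0 < n)%N.
Notation Tr := (@trn F n).
Variables (f M : F -> F).
Hypothesis fid : forall x, idem (f x).
Hypothesis hD : forall x z, f (x + z) + f x + f z = Tr (x * M z).
Hypothesis hM : forall x y, M (x + y) = M x + M y.

Lemma R0 : 0 \in [pred z | M z == 0].
Proof. by rewrite inE /= (M0 hM). Qed.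

Lemma Rpos : (0 < #|[pred z | M z == 0%R]|)%N.
Proof. by apply/card_gt0P; exists (0 : F); exact: R0. Qed.

Lemma pow2_nz : (2 ^ n)%:Z != 0.
Proof. by rewrite -natz pnatr_eq0 expn_eq0. Qed.

Lemma bent_iff : ~~ odd n -> bent n f <-> #|[pred z | M z == 0]| = 1%N.
Proof.
move=> ev.
have nn : (n./2 + n./2)%N = n by rewrite addnn -[RHS](odd_double_half n) (negbTE ev).
split.
  move=> hb; have [a ha] := walsh_exists hF hn0 fid hD hM.
  have := abs_to_sq (hb a); rewrite nn ha => h.
  have : (2 ^ n)%:Z * 1 = (2 ^ n)%:Z * #|[pred z | M z == 0]|%:Z by rewrite mulr1.
  by move/(mulfI pow2_nz) => [->].
move=> h1 a; apply: sq_to_abs; rewrite nn.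
apply: (walsh_trivR hF hn0 fid hD hM) => z hz.
apply/eqP; apply: contraT => nz.
have : (1 < #|[pred z | M z == 0%R]|)%N.
  apply/card_gt1P; exists (0 : F), z; split => //; [exact: R0 | by rewrite inE /= hz | by rewrite eq_sym].
by rewrite h1.
Qed.

Lemma semibent_iff : odd n -> semibent n f <-> #|[pred z | M z == 0]| = 2%N.
Proof.
move=> od.
have nn : ((n + 2) %/ 2 + (n + 2) %/ 2)%N = n.+1.
  have e := odd_double_half n; rewrite od /= in e; rewrite -e; lia.
split.
  move=> hs; have [a ha] := walsh_exists hF hn0 fid hD hM.
  case: (hs a) => h.
    move: ha; rewrite -real_normK ?num_real // h expr0n /= => /esym /eqP.
    rewrite mulf_eq0 (negbTE pow2_nz) /= -natz pnatr_eq0 => /eqP h0.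
    by move: Rpos; rewrite h0.
  have := abs_to_sq h; rewrite nn ha expnS => h'.
  have : (2 ^ n)%:Z * 2%N%:Z = (2 ^ n)%:Z * #|[pred z | M z == 0]|%:Z.
    by rewrite h' -!natz -natrM mulnC.
  by move/(mulfI pow2_nz) => [<-].
move=> h2 a; case: (walsh_vals hF hn0 fid hD hM a) => h.
  by left; apply/eqP; rewrite normr_eq0; move/eqP: h; rewrite expf_eq0.
right; apply: sq_to_abs; rewrite nn h h2 expnS -!natz -natrM mulnC.
done.
Qed.

End Final.

Lemma F2_cases (b : 'F_2) : b = 0 \/ b = 1.
Proof. by move: b => [[|[|//]] H]; [left|right]; apply/val_inj. Qed.

Section Opev.
Variable F : finFieldType.
Hypothesis h2 : 2 \in [pchar F].
Variable e : nat.

Definition fiota (b : 'F_2) : F := (val b)%:R.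

Lemma fiota0 : fiota 0 = 0. Proof. by []. Qed.
Lemma fiota1 : fiota 1 = 1. Proof. by rewrite /fiota /= mulr1n. Qed.

Lemma fiotaD a b : fiota (a + b) = fiota a + fiota b.
Proof.
case: (F2_cases a) => ->; case: (F2_cases b) => ->;
  rewrite ?add0r ?addr0 ?fiota0 ?fiota1 ?add0r ?addr0 //.
by rewrite (addxx h2) -fiota0; congr fiota; apply/val_inj.
Qed.

Lemma fiotaM a b : fiota (a * b) = fiota a * fiota b.
Proof.
case: (F2_cases a) => ->; case: (F2_cases b) => ->;
  by rewrite ?mul0r ?mulr0 ?mul1r ?mulr1 ?fiota0 ?fiota1 ?mul0r ?mulr0 ?mulr1.
Qed.

Lemma fiota_idem b : idem (fiota b).
Proof. by case: (F2_cases b) => ->; rewrite ?fiota0 ?fiota1; [exact: (@idem0 F) | exact: (@idem1 F)]. Qed.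

Lemma idem_frob (u : F) j : idem u -> u ^+ (2 ^ j) = u.
Proof.
move=> hu; elim: j => [|j IH]; first by rewrite expr1.
by rewrite expnS mulnC exprM IH hu.
Qed.

Lemma fiota_eq0 b : (fiota b == 0) = (b == 0).
Proof. by case: (F2_cases b) => ->; rewrite ?fiota0 ?fiota1 ?eqxx ?oner_eq0. Qed.

Definition opev (p : {poly 'F_2}) (z : F) : F :=
  \sum_(j < size p) fiota p`_j * z ^+ (2 ^ (e * j)).

Lemma opev_widen N (p : {poly 'F_2}) (z : F) : (size p <= N)%N ->
  opev p z = \sum_(j < N) fiota p`_j * z ^+ (2 ^ (e * j)).
Proof.
move=> hN; rewrite /opev (big_ord_widen N (fun j => fiota p`_j * z ^+ (2 ^ (e * j)))) //.
rewrite big_mkcond /=; apply: eq_bigr => j _.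
by case: ifP => // /negbT; rewrite -leqNgt => h; rewrite nth_default // fiota0 mul0r.
Qed.

Lemma opev0 z : opev 0 z = 0.
Proof. by rewrite /opev size_poly0 big_ord0. Qed.

Lemma opevD p q z : opev (p + q) z = opev p z + opev q z.
Proof.
set N := maxn (size p) (size q).
rewrite (@opev_widen N (p + q)) ?(leq_trans (size_polyD _ _)) //.
rewrite (@opev_widen N p) ?leq_maxl // (@opev_widen N q) ?leq_maxr //.
by rewrite -big_split; apply: eq_bigr => j _; rewrite coefD fiotaD mulrDl.
Qed.

Lemma opevN p z : opev (- p) z = opev p z.
Proof.
have : opev (- p) z + opev p z = 0 by rewrite -opevD addNr opev0.
by move/eqP; rewrite addr_eq0 (oppx h2) => /eqP.
Qed.

Lemma opevC c z : opev c%:P z = fiota c * z.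
Proof.
rewrite (@opev_widen 1) ?size_polyC ?leq_b1 // big_ord1 coefC /=.
by rewrite muln0 expr1.
Qed.

Lemma opevZ c p z : opev (c *: p) z = fiota c * opev p z.
Proof.
rewrite (@opev_widen (size p)) ?size_scale_leq // /opev mulr_sumr.
by apply: eq_bigr => j _; rewrite coefZ fiotaM mulrA.
Qed.

Lemma opevXmul p z : opev (p * 'X) z = opev p z ^+ (2 ^ e).
Proof.
rewrite (@opev_widen (size p).+1); last first.
  by apply: leq_trans (size_mul_leq _ _) _; rewrite size_polyX addn2.
rewrite big_ord_recl coefMX eqxx fiota0 mul0r add0r /opev frob_sum //.
apply: eq_bigr => j _; rewrite coefMX /= frobM // (idem_frob _ (fiota_idem _)).
by rewrite frobX; congr (fiota p`_ _ * z ^+ (2 ^ _)); rewrite /bump /=; lia.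
Qed.

Lemma opev_step p c z : opev (p * 'X + c%:P) z = fiota c * z + opev p z ^+ (2 ^ e).
Proof. by rewrite opevD opevXmul opevC addrC. Qed.

Lemma opevM p q z : opev (p * q) z = opev p (opev q z).
Proof.
elim/poly_ind: p => [|p c IH]; first by rewrite mul0r !opev0.
rewrite mulrDl mulrAC opevD opevXmul IH mul_polyC opevZ opev_step addrC.
done.
Qed.

Lemma opev_addz p z w : opev p (z + w) = opev p z + opev p w.
Proof.
by rewrite /opev -big_split; apply: eq_bigr => j _; rewrite frobD // mulrDr.
Qed.

Lemma opev_z0 p : opev p 0 = 0.
Proof. by rewrite /opev big1 // => j _; rewrite frob0 mulr0. Qed.

Lemma opevXn j z : opev 'X^j z = z ^+ (2 ^ (e * j)).
Proof.
elim: j => [|j IH]; first by rewrite expr0 -polyC1 opevC fiota1 mul1r muln0 expr1.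
by rewrite exprSr opevXmul IH frobX mulnS addnC.
Qed.

Lemma opev_at1 p : opev p 1 = fiota p.[1].
Proof.
elim/poly_ind: p => [|p c IH]; first by rewrite opev0 horner0 fiota0.
by rewrite opev_step IH (idem_frob _ (fiota_idem _)) hornerMXaddC !mulr1 fiotaD addrC.
Qed.

End Opev.

Section Quad.
Variable F : finFieldType.
Hypothesis h2 : 2 \in [pchar F].
Variable n : nat.
Hypothesis hn0 : (0 < n)%N.
Hypothesis hq : forall x : F, x ^+ (2 ^ n) = x.
Notation Tr := (@trn F n).

Let TrD' x y : Tr (x + y) = Tr x + Tr y := @TrD F h2 n x y.

Lemma kill2' (a b c : F) : a = b + c *+ 2 -> a = b.
Proof. by rewrite mulrn_pchar // addr0. Qed.

Lemma c4 (A B C D : F) : A + B + (C + D) + A + D = B + C.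
Proof. by apply: (@kill2' _ _ (A + D)); ring. Qed.

Definition rho (j : nat) (v : F) := v ^+ (2 ^ j) + v ^+ (2 ^ ((n - 1) * j)).

Lemma Tr_swap j (x z : F) : Tr (z * x ^+ (2 ^ j)) = Tr (x * z ^+ (2 ^ ((n - 1) * j))).
Proof.
rewrite -(Tr_frob h2 hn0 hq ((n - 1) * j)) frobM frobX.
have -> : (j + (n - 1) * j)%N = (n * j)%N by nia.
by rewrite (frob_nq hq) mulrC.
Qed.

Lemma quadD j (x z : F) :
  Tr ((x + z) ^+ (1 + 2 ^ j)) + Tr (x ^+ (1 + 2 ^ j)) + Tr (z ^+ (1 + 2 ^ j))
  = Tr (x * rho j z).
Proof.
rewrite add1n !exprS frobD // mulrDl !mulrDr !TrD' /rho (Tr_swap j x z).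
exact: c4.
Qed.

Lemma trhalfD (x y : F) : trhalf n (x + y) = trhalf n x + trhalf n y.
Proof. by rewrite /trhalf -big_split /=; apply: eq_bigr => j _; rewrite frobD. Qed.

Lemma trhalf_pair (w : F) : (n./2 + n./2 = n)%N ->
  trhalf n w + trhalf n (w ^+ (2 ^ n./2)) = Tr w.
Proof.
move=> nn; rewrite /trhalf /trn.
have -> : \sum_(j < n) w ^+ (2 ^ j) = \sum_(j < n./2 + n./2) w ^+ (2 ^ j) by rewrite nn.
rewrite big_split_ord /=; congr (_ + _).
by apply: eq_bigr => j _; rewrite frobX.
Qed.

Lemma trhalf_quad (x z : F) : ~~ odd n ->
  trhalf n ((x + z) ^+ (1 + 2 ^ n./2)) + trhalf n (x ^+ (1 + 2 ^ n./2))
  + trhalf n (z ^+ (1 + 2 ^ n./2)) = Tr (x * z ^+ (2 ^ n./2)).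
Proof.
move=> ev.
have nn : (n./2 + n./2 = n)%N.
  by rewrite addnn -[RHS](odd_double_half n) (negbTE ev).
have E : z * x ^+ (2 ^ n./2) = (x * z ^+ (2 ^ n./2)) ^+ (2 ^ n./2).
  by rewrite frobM frobX nn hq mulrC.
rewrite add1n !exprS frobD // mulrDl !mulrDr !trhalfD E -(trhalf_pair _ nn).
exact: c4.
Qed.

Lemma rho_exp H (v : F) : (0 < H)%N -> (H <= n)%N ->
  v ^+ (2 ^ ((n - 1) * H)) = v ^+ (2 ^ (n - H)).
Proof.
move=> h0 hn; apply: (frob_eqmod hq).
have -> : ((n - 1) * H = (H - 1) * n + (n - H))%N by nia.
by rewrite modnMDl.
Qed.

Lemma rho_sum_gen H (v : F) : (0 < H)%N -> (H <= n)%N ->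
  \sum_(1 <= i < H) rho i v =
  \sum_(1 <= j < H) v ^+ (2 ^ j) + \sum_((n - H).+1 <= j < n) v ^+ (2 ^ j).
Proof.
elim: H => [//|H IH] _ hn.
case: (posnP H) => [->|hpos].
  by rewrite !big_geq ?addr0 //; lia.
rewrite big_nat_recr //= IH //; last by lia.
rewrite big_nat_recr //= (@big_ltn _ _ _ (n - H.+1).+1) ?ltnS; last by lia.
have -> : (n - H.+1).+2 = (n - H).+1 by lia.
have -> : (n - H.+1).+1 = (n - H)%N by lia.
rewrite /rho rho_exp //; last by lia.
ring.
Qed.

Lemma Tr_split (v : F) : Tr v = v + \sum_(1 <= j < n) v ^+ (2 ^ j).
Proof. by rewrite /trn -(big_mkord xpredT (fun j => v ^+ (2 ^ j))) big_ltn // expr1. Qed.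

Lemma pfun_D (u v : F) : pfun n (u + v) + pfun n u + pfun n v = Tr (u * (Tr v + v)).
Proof.
rewrite /pfun; case: ifP => ev.
- set h := n./2.
  have nn : (h + h = n)%N by rewrite /h addnn -[RHS](odd_double_half n) (negbTE ev).
  have hpos : (0 < h)%N by lia.
  rewrite (_ : forall a b c d e f : F, a + b + (c + d) + (e + f) = (a + c + e) + (b + d + f));
    last by move=> *; ring.
  rewrite trhalf_quad //= -!big_split /=.
  under eq_bigr do rewrite quadD.
  rewrite -Tr_sum // -TrD' -mulr_sumr -mulrDr; congr Tr; congr (_ * _).
  rewrite rho_sum_gen //; last by lia.
  rewrite Tr_split (_ : (n - h).+1 = h.+1); last by lia.
  rewrite -/h addrAC -(big_nat_recr h _ (fun j => v ^+ (2 ^ j))) /=; last by lia.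
  rewrite -big_cat_nat /=; [|lia|lia].
  by rewrite addrAC (addxx h2) add0r.
- set h := n./2.
  have nn : (h + h).+1 = n by rewrite /h addnn -[RHS](odd_double_half n) (negbFE ev).
  rewrite -!big_split /=.
  under eq_bigr do rewrite quadD.
  rewrite -Tr_sum // -mulr_sumr; congr Tr; congr (_ * _).
  rewrite rho_sum_gen //; [|lia|lia].
  rewrite Tr_split (_ : (n - (h + 1)).+1 = h + 1)%N; last by lia.
  rewrite -big_cat_nat /=; [|lia|lia].
  by rewrite addrAC (addxx h2) add0r.
Qed.

End Quad.

Lemma F2_11 : (1 + 1 : 'F_2) = 0.
Proof. by apply/val_inj. Qed.

Section FQ.
Variable F : finFieldType.
Hypothesis h2 : 2 \in [pchar F].
Variables n e m k : nat.
Hypothesis hn0 : (0 < n)%N.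
Hypothesis hq : forall x : F, x ^+ (2 ^ n) = x.
Hypothesis hn : n = (e * m)%N.
Hypothesis he : (1 <= e)%N.
Hypothesis hm : (1 <= m)%N.
Variables alpha beta : F.
Hypothesis halpha_sub : alpha ^+ (2 ^ e) = alpha.
Hypothesis hbeta : beta = alpha ^+ 2.
Variable c : nat -> bool.
Notation Tr := (@trn F n).
Notation opev := (@opev F e).

Definition Pc := cpoly m c \Po 'X^k.
Definition Mfun (w : F) := Tr w + opev Pc w.
Definition Mf (z : F) := alpha * Mfun (alpha * z).

Let TrD' x y : Tr (x + y) = Tr x + Tr y := @TrD F h2 n x y.

Lemma fiota_nat (b : bool) : fiota F (b%:R) = b%:R.
Proof. by case: b; rewrite ?fiota1 ?fiota0. Qed.

Lemma alpha_frob q : alpha ^+ (2 ^ (e * q)) = alpha.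
Proof.
elim: q => [|q IH]; first by rewrite muln0 expr1.
by rewrite mulnS -frobX halpha_sub IH.
Qed.

Lemma beta_term q (x : F) : beta * x ^+ (1 + 2 ^ (e * q)) = (alpha * x) ^+ (1 + 2 ^ (e * q)).
Proof. by rewrite exprMn hbeta; congr (_ * _); rewrite add1n [RHS]exprS alpha_frob expr2. Qed.

Lemma opev_Pc w : opev Pc w =
  w + \sum_(1 <= i < (m.-1)./2 + 1) (c i)%:R * rho n (e * k * i) w.
Proof.
rewrite /Pc /cpoly comp_polyD (comp_poly_multiplicative _).2.
rewrite (big_morph (fun p => p \Po 'X^k) (fun p q => comp_polyD p q _) (comp_polyC 0 _)).
rewrite (opevD h2) -polyC1 opevC fiota1 mul1r; congr (_ + _).
rewrite (big_morph (fun p => opev p w) (fun p q => opevD h2 e p q w) (opev0 e w)).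
apply: eq_big_nat => i /andP [hi1 hi2].
rewrite comp_polyZ comp_polyD !comp_Xn_poly opevZ (opevD h2) -!exprM !(opevXn h2) fiota_nat.
congr (_ * _); rewrite /rho mulnA; congr (_ + _).
apply: (frob_eqmod hq); apply/eqP; rewrite -(eqn_modDr (e * k * i)).
have -> : ((n - 1) * (e * k * i) + e * k * i = (e * k * i) * n)%N by nia.
have -> : (e * (k * (m - i)) + e * k * i = k * n)%N.
  have him : (i <= m)%N by lia.
  rewrite hn; nia.
by rewrite !modnMl.
Qed.

Definition gfun (u : F) := pfun n u +
  \sum_(1 <= i < (m.-1)./2 + 1) (c i)%:R * Tr (u ^+ (1 + 2 ^ (e * k * i))).

Lemma fQ_eq x : fQ n e m k alpha beta c x = gfun (alpha * x).
Proof.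
rewrite /fQ /gfun; congr (_ + _); apply: eq_bigr => i _.
by rewrite -mulnA beta_term.
Qed.

Lemma c6 (a b c1 d e1 f : F) : a + b + (c1 + d) + (e1 + f) = (a + c1 + e1) + (b + d + f).
Proof. by ring. Qed.

Lemma fQ_D x z : fQ n e m k alpha beta c (x + z) + fQ n e m k alpha beta c x
   + fQ n e m k alpha beta c z = Tr (x * Mf z).
Proof.
rewrite !fQ_eq mulrDr /gfun c6 (pfun_D h2 hn0 hq) -!big_split /=.
under eq_bigr => i _ do rewrite -!mulrDr (mulrDr alpha) (quadD h2 hn0 hq).
rewrite /Mf /Mfun opev_Pc [x * (alpha * _)]mulrA (mulrC x alpha).
set u := alpha * x; set v := alpha * z.
rewrite addrA [in RHS]mulrDr [in RHS]TrD' [in RHS]mulr_sumr [in RHS](@Tr_sum F h2 n); congr (_ + _).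
apply: eq_bigr => i _; rewrite mulrCA.
by case: (c i); rewrite ?mul1r ?mul0r ?Tr0.
Qed.

Lemma Mf_add z1 z2 : Mf (z1 + z2) = Mf z1 + Mf z2.
Proof.
rewrite /Mf /Mfun -mulrDr; congr (_ * _).
by rewrite mulrDr TrD' (opev_addz h2) addrACA.
Qed.

Lemma sumfrob_idem h (y : F) : y ^+ (2 ^ h) = y -> idem (\sum_(j < h) y ^+ (2 ^ j)).
Proof.
move=> hy; case: h hy => [|h'] hy; first by rewrite big_ord0; exact: idem0.
have E : forall t : F, t ^+ 2 = t ^+ (2 ^ 1) by [].
rewrite /idem E frob_sum //.
under eq_bigr do rewrite frobX addn1.
rewrite big_ord_recr big_ord_recl /= hy expr1 addrC; congr (_ + _).
Qed.

Lemma pfun_idem (u : F) : idem (pfun n u).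
Proof.
have TrI y : idem (Tr y) by exact: (Tr_idem h2 hn0 hq).
rewrite /pfun; case: ifP => ev.
  apply: (idemD h2); first by apply: (idem_sum h2) => i _.
  have nn : (n./2 + n./2 = n)%N by rewrite addnn -[RHS](odd_double_half n) (negbTE ev).
  apply: sumfrob_idem.
  by rewrite add1n exprS frobM frobX nn hq mulrC.
by apply: (idem_sum h2) => i _.
Qed.

Lemma fQ_idem x : idem (fQ n e m k alpha beta c x).
Proof.
rewrite fQ_eq /gfun; apply: (idemD h2); first exact: pfun_idem.
apply: (idem_sum h2) => i _; apply: idemM; first exact: idem_nat.
exact: (Tr_idem h2 hn0 hq).
Qed.

End FQ.

Section Ker.
Variable F : finFieldType.
Hypothesis h2 : 2 \in [pchar F].
Variables n e m k : nat.
Hypothesis hn0 : (0 < n)%N.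
Hypothesis hq : forall x : F, x ^+ (2 ^ n) = x.
Hypothesis hF : #|F| = (2 ^ n)%N.
Hypothesis hn : n = (e * m)%N.
Hypothesis he : (1 <= e)%N.
Hypothesis hm : (1 <= m)%N.
Variable alpha : F.
Hypothesis halpha0 : alpha != 0.
Variable c : nat -> bool.
Notation Tr := (@trn F n).
Notation opev := (@opev F e).
Notation P := (Pc m k c).
Notation Mfun := (@Mfun F n e m k c).
Notation Xm1 := ('X^m - 1 : {poly 'F_2}).

Lemma natr_odd : (n%:R : F) = (odd n)%:R.
Proof.
rewrite -{1}(odd_double_half n) natrD -muln2 natrM (pcharf0 h2) mulr0 addr0.
by [].
Qed.

Lemma Tr_opev p z : Tr (opev p z) = fiota F p.[1] * Tr z.
Proof.
elim/poly_ind: p => [|p c0 IH]; first by rewrite opev0 horner0 fiota0 mul0r Tr0.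
rewrite opev_step // TrD // (Tr_frob h2 hn0 hq) IH hornerMXaddC mulr1 fiotaD // mulrDl addrC.
by congr (_ + _); case: (F2_cases c0) => ->; rewrite ?fiota0 ?fiota1 ?mul0r ?mul1r ?Tr0.
Qed.

Lemma opev_Xm1 z : opev Xm1 z = 0.
Proof.
rewrite (opevD h2) opevN // (opevXn h2) -polyC1 opevC fiota1 mul1r -hn hq.
exact: addxx.
Qed.

Lemma Pc1 : P.[1] = 1.
Proof.
have h1p : (1 : {poly 'F_2}).[1] = 1 by rewrite -polyC1 hornerC.
rewrite /Pc horner_comp hornerXn expr1n /cpoly hornerD h1p horner_sum.
rewrite big1 ?addr0 // => i _.
by rewrite hornerZ hornerD !hornerXn !expr1n F2_11 mulr0.
Qed.

Lemma opevP1 : opev P 1 = 1.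
Proof. by rewrite (opev_at1 h2) Pc1 fiota1. Qed.

Lemma Mfun0 : Mfun 0 = 0.
Proof. by rewrite /Submission.Mfun Tr0 opev_z0 addr0. Qed.

Lemma Mfun1 : (Mfun 1 == 0) = odd n.
Proof.
rewrite /Submission.Mfun opevP1 (@Tr1 F n) natr_odd.
case: (odd n) => /=; first by rewrite (addxx h2) eqxx.
by rewrite add0r oner_eq0.
Qed.

Lemma opev1 z : opev 1 z = z.
Proof. by rewrite -polyC1 opevC fiota1 mul1r. Qed.

Lemma coprime_ker : coprimep P Xm1 ->
  forall w, Mfun w = 0 -> w = 0 \/ (w = 1 /\ odd n).
Proof.
move=> /Bezout_eq1_coprimepP [[u v] /= huv].
have inj w : opev P w = 0 -> w = 0.
  move=> hw; rewrite -(opev1 w) -huv (opevD h2) !(opevM h2) hw opev_Xm1 !opev_z0.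
  by rewrite addr0.
move=> w hw.
have hPw : opev P w = Tr w.
  by move/eqP: hw; rewrite /Submission.Mfun addr_eq0 (oppx h2) => /eqP.
case: (idem01 (Tr_idem h2 hn0 hq w)) => ht; rewrite ht in hPw.
  by left; exact: inj.
right.
have w1 : w = 1.
  have : opev P (w + 1) = 0 by rewrite (opev_addz h2) hPw opevP1 (addxx h2).
  by move/inj/eqP; rewrite addr_eq0 (oppx h2) => /eqP.
split => //; rewrite -Mfun1 w1 in hw *; by rewrite hw.
Qed.

Lemma noncoprime_ker : ~~ coprimep P Xm1 ->
  exists w, [/\ Mfun w = 0, w != 0 & w != 1].
Proof.
move=> ncop.
set g := gcdp P Xm1.
have Xm1nz : Xm1 != 0 by rewrite -size_poly_eq0 size_Xn_sub_1.
have gnz : g != 0 by rewrite gcdp_eq0 negb_and Xm1nz orbT.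
have szg : (1 < size g)%N.
  move: ncop; rewrite /coprimep -/g.
  have := size_poly_gt0 g; rewrite gnz; lia.
set h := Xm1 %/ g.
have hg : h * g = Xm1 by rewrite divpK // dvdp_gcdr.
set q := P %/ g.
have qg : q * g = P by rewrite divpK // dvdp_gcdl.
have hnz : h != 0 by apply: contra_neq Xm1nz => h0; rewrite -hg h0 mul0r.
have szh : (size h <= m)%N.
  have := size_mul hnz gnz; rewrite hg size_Xn_sub_1 //; move: szg; set sg := size g; set sh := size h; lia.
have hpos : (0 < size h)%N by rewrite size_poly_gt0.
have [y hy] : exists y, opev h y != 0.
  have := @linpoly_nz F e (size h).-1 (fun j => fiota F h`_j) he.
  rewrite -/(lead_coef h) fiota_eq0 lead_coef_eq0 hnz.
  have hlt : (2 ^ (e * (size h).-1) < #|F|)%N.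
    by rewrite hF hn ltn_exp2l // ltn_pmul2l //; lia.
  move=> /(_ isT hlt) [y hy]; exists y.
  rewrite (@opev_widen F e ((size h).-1.+1)); first exact: hy. by rewrite prednK.
set w := opev h y.
have Pw : opev P w = 0.
  by rewrite -qg (opevM h2) /w -(opevM h2 e g h y) (mulrC g h) hg opev_Xm1 opev_z0.
have h1 : h.[1] = 0.
  have : (h * g).[1] = 0.
    by rewrite hg hornerD hornerN hornerXn expr1n -polyC1 hornerC subrr.
  rewrite hornerM => /eqP; rewrite mulf_eq0 => /orP [/eqP //|/eqP g1].
  by move: Pc1; rewrite -qg hornerM g1 mulr0 => /eqP; rewrite eq_sym oner_eq0.
have Trw : Tr w = 0 by rewrite /w Tr_opev h1 fiota0 mul0r.
exists w; split => //.
- by rewrite /Submission.Mfun Trw Pw addr0.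
- apply/eqP => w1; move: Pw; rewrite w1 opevP1 => /eqP; by rewrite oner_eq0.
Qed.

Lemma memR z : (Mf n e m k alpha c z == 0) = (Mfun (alpha * z) == 0).
Proof. by rewrite /Mf mulf_eq0 (negbTE halpha0). Qed.

Lemma card_iff : (if odd n then #|[pred z | Mf n e m k alpha c z == 0]| = 2%N
   else #|[pred z | Mf n e m k alpha c z == 0]| = 1%N) <-> coprimep P Xm1.
Proof.
have ai : alpha * alpha^-1 = 1 by rewrite mulfV.
have az z : (alpha * z == 0) = (z == 0) by rewrite mulf_eq0 (negbTE halpha0).
have a1 z : (alpha * z == 1) = (z == alpha^-1).
  apply/eqP/eqP => [h|->]; last exact: mulfV. by rewrite -[z](mulKf halpha0) h mulr1.
case cop: (coprimep P Xm1).
  split => // _.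
  have mem z : (Mf n e m k alpha c z == 0) = (z == 0) || ((z == alpha^-1) && odd n).
    rewrite memR -(az z) -(a1 z).
    apply/idP/idP => [/eqP hw|].
      by case: (coprime_ker cop hw) => [->|[-> ->]]; rewrite eqxx ?orbT.
    by case/orP => [/eqP->|/andP [/eqP-> od]]; [rewrite Mfun0 | rewrite Mfun1].
  case od: (odd n).
    rewrite (eq_card (B := pred2 0 alpha^-1)); first by rewrite card2 eq_sym invr_eq0 halpha0.
    by move=> z; rewrite inE /= mem od andbT.
  rewrite (eq_card (B := pred1 0)); first by rewrite card1.
  by move=> z; rewrite inE /= mem od andbF orbF.
split => // hc; exfalso.
have [w [hw w0 w1]] := noncoprime_ker (negbT cop).
set z1 := alpha^-1 * w.
have hz1 : Mf n e m k alpha c z1 == 0 by rewrite memR /z1 (mulVKf halpha0) hw.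
have z10 : z1 != 0 by rewrite /z1 mulf_eq0 invr_eq0 negb_or halpha0.
have h0 : Mf n e m k alpha c 0 == 0 by rewrite memR mulr0 Mfun0.
move: hc; case od: (odd n) => hc.
  have : (2 < #|[pred z | Mf n e m k alpha c z == 0%R]|)%N.
    apply/card_gt2P; exists 0, alpha^-1, z1; split; split => //.
    - by rewrite inE /= memR ai Mfun1.
    - by rewrite eq_sym invr_eq0.
    - by apply: contra_neq w1 => h; rewrite -(mulVKf halpha0 w) -/z1 -h ai.
  by rewrite hc.
have : (1 < #|[pred z | Mf n e m k alpha c z == 0%R]|)%N.
  by apply/card_gt1P; exists 0, z1; split => //; rewrite eq_sym.
by rewrite hc.
Qed.

End Ker.

Unset Implicit Arguments.
Theorem theorem4 (F : finFieldType) (n e m k : nat)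
  (hF : #|F| = (2 ^ n)%N) (hn : n = (e * m)%N) (he : (1 <= e)%N) (hm : (1 <= m)%N)
  (hk : (1 <= k)%N) (alpha beta : F)
  (halpha_sub : alpha ^+ (2 ^ e) = alpha) (halpha0 : alpha != 0)
  (hbeta : beta = alpha ^+ 2) (c : nat -> bool) :
  (if odd n then semibent n (fQ n e m k alpha beta c)
   else bent n (fQ n e m k alpha beta c)) <->
  coprimep (cpoly m c \Po 'X^k) ('X^m - 1).
Proof.
have h2 : 2 \in [pchar F] := card_finPcharP hF (isT : prime 2).
have hq : forall x : F, x ^+ (2 ^ n) = x by move=> x; rewrite -hF expf_card.
have hn0 : (0 < n)%N by rewrite hn muln_gt0 he hm.
have fid := fQ_idem h2 m k hn0 hq halpha_sub hbeta c.
have hD := fQ_D h2 k hn0 hq hn he hm halpha_sub hbeta c.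
have hM := Mf_add h2 n e m k alpha c.
have C := card_iff h2 k hn0 hq hF hn he hm halpha0 c.
case: ifP C => od C.
  exact: (iff_trans (semibent_iff hF hn0 fid hD hM od) C).
exact: (iff_trans (bent_iff hF hn0 fid hD hM (negbT od)) C).
Qed.
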